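(* If $X$ is a space satisfying ${\sf S}_1(\mathcal{G}_K,\mathcal{G}_\Gamma)$ and every compact subset of $X$ is finite, then for every $\gamma$-space $Y$, the product $X\times Y$ is a $\gamma$-space.
   Context: All spaces are infinite ${\sf T}_1$ topological spaces. $\mathcal{G}_K$ is the family of all collections $\mathcal{U}$ of ${\sf G}_\delta$ subsets of $X$ with $X\notin\mathcal{U}$ such that each compact subset of $X$ is contained in some member of $\mathcal{U}$. $\mathcal{G}_\Gamma$ is the family of infinite collections $\mathcal{U}$ of ${\sf G}_\delta$ subsets of $X$ such that every infinite subcollection covers $X$. ${\sf S}_1(\mathcal{A},\mathcal{B})$: for each sequence $(A_n)$ of elements of $\mathcal{A}$ there are $B_n\in A_n$ with $\{B_n:n\in\mathbb{N}\}\in\mathcal{B}$. $\Omega$: open covers $\mathcal{U}$ of the space with the space itself not in $\mathcal{U}$ such that every finite subset lies in some member. $\Gamma$: infinite open covers $\mathcal{U}$ such that each point lies outside only finitely many members of $\mathcal{U}$. A $\gamma$-space is a space satisfying ${\sf S}_1(\Omega,\Gamma)$. *)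

(* Defs.v *)
From Stdlib Require Import List.
Import ListNotations.
Set Implicit Arguments.

Record topology (X : Type) := {
  is_open : (X -> Prop) -> Prop;
  open_full : is_open (fun _ => True);
  open_inter : forall U V, is_open U -> is_open V -> is_open (fun x => U x /\ V x);
  open_union : forall F : (X -> Prop) -> Prop,
      (forall U, F U -> is_open U) -> is_open (fun x => exists U, F U /\ U x)
}.

Definition T1 {X} (t : topology X) : Prop :=
  forall x y : X, x <> y -> exists U, is_open t U /\ U x /\ ~ U y.

Definition infinite_type (X : Type) : Prop :=
  forall l : list X, exists x, ~ In x l.

(* "space" in the paper: an infinite T1 topological space *)
Definition space {X} (t : topology X) : Prop := infinite_type X /\ T1 t.

Definition compact {X} (t : topology X) (K : X -> Prop) : Prop :=
  forall F : (X -> Prop) -> Prop,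
    (forall U, F U -> is_open t U) ->
    (forall x, K x -> exists U, F U /\ U x) ->
    exists l : list (X -> Prop),
      (forall U, In U l -> F U) /\ (forall x, K x -> exists U, In U l /\ U x).

Definition finite_set {X} (K : X -> Prop) : Prop :=
  exists l : list X, forall x, K x -> In x l.

Definition G_delta {X} (t : topology X) (A : X -> Prop) : Prop :=
  exists U : nat -> (X -> Prop), (forall n, is_open t (U n)) /\
    (forall x, A x <-> forall n, U n x).

Definition whole {X} : X -> Prop := fun _ => True.

Definition infinite_family {X} (F : (X -> Prop) -> Prop) : Prop :=
  forall l : list (X -> Prop), exists A, F A /\ ~ In A l.

Definition subfamily {X} (G F : (X -> Prop) -> Prop) : Prop :=
  forall A, G A -> F A.

Definition cG_K {X} (t : topology X) (F : (X -> Prop) -> Prop) : Prop :=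
  (forall A, F A -> G_delta t A) /\ ~ F whole /\
  (forall K, compact t K -> exists A, F A /\ forall x, K x -> A x).

Definition cG_Gamma {X} (t : topology X) (F : (X -> Prop) -> Prop) : Prop :=
  infinite_family F /\ (forall A, F A -> G_delta t A) /\
  (forall G, subfamily G F -> infinite_family G -> forall x, exists A, G A /\ A x).

Definition cOmega {X} (t : topology X) (F : (X -> Prop) -> Prop) : Prop :=
  (forall A, F A -> is_open t A) /\ ~ F whole /\
  (forall l : list X, exists A, F A /\ forall x, In x l -> A x).

Definition cGamma {X} (t : topology X) (F : (X -> Prop) -> Prop) : Prop :=
  infinite_family F /\ (forall A, F A -> is_open t A) /\
  (forall x, exists l : list (X -> Prop), forall A, F A -> ~ A x -> In A l).

Definition S1 {X} (cA cB : ((X -> Prop) -> Prop) -> Prop) : Prop :=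
  forall An : nat -> ((X -> Prop) -> Prop), (forall n, cA (An n)) ->
    exists Bn : nat -> (X -> Prop), (forall n, An n (Bn n)) /\
      cB (fun C => exists n, C = Bn n).

Definition gamma_space {X} (t : topology X) : Prop :=
  space t /\ S1 (cOmega t) (cGamma t).

Definition prod_open {X Y} (tX : topology X) (tY : topology Y) (W : X * Y -> Prop) : Prop :=
  forall p, W p -> exists U V, is_open tX U /\ is_open tY V /\ U (fst p) /\ V (snd p) /\
    forall q, U (fst q) -> V (snd q) -> W q.

Lemma prod_open_full {X Y} (tX : topology X) (tY : topology Y) :
  prod_open tX tY (fun _ => True).
Proof.
  intros p _. exists (fun _ => True), (fun _ => True).
  repeat split; try apply open_full; auto.
Qed.

Lemma prod_open_inter {X Y} (tX : topology X) (tY : topology Y) U V :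
  prod_open tX tY U -> prod_open tX tY V -> prod_open tX tY (fun x => U x /\ V x).
Proof.
  intros HU HV p [Up Vp].
  destruct (HU p Up) as [A1 [B1 [HA1 [HB1 [a1 [b1 H1]]]]]].
  destruct (HV p Vp) as [A2 [B2 [HA2 [HB2 [a2 [b2 H2]]]]]].
  exists (fun x => A1 x /\ A2 x), (fun y => B1 y /\ B2 y).
  repeat split; try apply open_inter; auto; intuition.
Qed.

Lemma prod_open_union {X Y} (tX : topology X) (tY : topology Y) (F : (X * Y -> Prop) -> Prop) :
  (forall U, F U -> prod_open tX tY U) -> prod_open tX tY (fun x => exists U, F U /\ U x).
Proof.
  intros HF p [U [FU Up]].
  destruct (HF U FU p Up) as [A [B [HA [HB [a [b H]]]]]].
  exists A, B. repeat split; auto. intros q qa qb. exists U; auto.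
Qed.

Definition prod_topology {X Y} (tX : topology X) (tY : topology Y) : topology (X * Y) :=
  {| is_open := prod_open tX tY;
     open_full := prod_open_full tX tY;
     open_inter := @prod_open_inter X Y tX tY;
     open_union := @prod_open_union X Y tX tY |}.

(* Main.v *)
Require Import Defs.
From Stdlib Require Import List Lia Arith Classical FunctionalExtensionality PropExtensionality ClassicalEpsilon.
Import ListNotations.

Lemma set_ext {Z} (A B : Z -> Prop) : (forall z, A z <-> B z) -> A = B.
Proof. intro H; apply functional_extensionality; intro z; apply propositional_extensionality; auto. Qed.

Lemma open_ext {Z} (t : topology Z) A B : is_open t A -> (forall z, A z <-> B z) -> is_open t B.
Proof. intros H E. rewrite <- (set_ext _ _ E). exact H. Qed.

Lemma choice {A B} (R : A -> B -> Prop) : (forall a, exists b, R a b) -> exists f, forall a, R a (f a).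
Proof.
  intros H. exists (fun a => proj1_sig (constructive_indefinite_description _ (H a))).
  intro a. exact (proj2_sig (constructive_indefinite_description _ (H a))).
Qed.

Lemma open_empty {Z} (t : topology Z) : is_open t (fun _ => False).
Proof.
  eapply open_ext. apply (open_union t (fun _ => False)). intros U [].
  intros z; split; [intros [U [[] _]] | intros []].
Qed.

Lemma open_union2 {Z} (t : topology Z) A B : is_open t A -> is_open t B -> is_open t (fun x => A x \/ B x).
Proof.
  intros HA HB. eapply open_ext. apply (open_union t (fun W => W = A \/ W = B)).
  intros W [-> | ->]; auto.
  intros z; split. intros [W [[-> | ->] Hw]]; [left|right]; auto.
  intros [a|b]; [exists A | exists B]; auto.
Qed.

Lemma open_compl_pt {Z} (t : topology Z) : T1 t -> forall z, is_open t (fun x => x <> z).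
Proof.
  intros HT z. eapply open_ext. apply (open_union t (fun W => is_open t W /\ ~ W z)).
  intros W [h _]; auto.
  intros x; split. intros [W [[_ Hn] Hw]] E; subst; auto.
  intros Hne. destruct (HT x z Hne) as [W [Ho [Hx Hz]]]. exists W; auto.
Qed.

Lemma gdelta_inter {Z} (t : topology Z) A B : G_delta t A -> G_delta t B -> G_delta t (fun z => A z /\ B z).
Proof.
  intros [U1 [Ho1 He1]] [U2 [Ho2 He2]]. exists (fun n x => U1 n x /\ U2 n x). split.
  intro n; apply open_inter; auto.
  intro x. rewrite He1, He2. split. intros [a b] n; auto. intros h; split; intro n; apply h.
Qed.

Lemma L1 {X Y} (tX : topology X) (tY : topology Y) (U : X*Y -> Prop) :
  prod_open tX tY U -> forall x (G : list Y), (forall g, In g G -> U (x,g)) ->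
  exists A B, is_open tX A /\ is_open tY B /\ A x /\ (forall g, In g G -> B g) /\
    forall p, A (fst p) -> B (snd p) -> U p.
Proof.
  intros HU x G. induction G as [|g G IH]; intros HG.
  - exists (fun _ => True), (fun _ => False). repeat split.
    apply open_full. apply open_empty. intros _ []. intros p _ [].
  - destruct IH as [A1 [B1 [HA1 [HB1 [Ax1 [HG1 Hb1]]]]]]. intros; apply HG; simpl; auto.
    destruct (HU (x,g)) as [A2 [B2 [HA2 [HB2 [Ax2 [Bg2 Hb2]]]]]]. apply HG; simpl; auto.
    simpl in *.
    exists (fun z => A1 z /\ A2 z), (fun y => B1 y \/ B2 y). repeat split; auto.
    apply open_inter; auto. apply open_union2; auto.
    intros g' [<-|Hg']; [right; auto | left; auto].
    intros p [a1 a2] [b|b]; auto.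
Qed.

Lemma L2 {X Y} (tX : topology X) (tY : topology Y) (U : X*Y -> Prop) :
  prod_open tX tY U -> forall (F : list X) (G : list Y), (forall f g, In f F -> In g G -> U (f,g)) ->
  exists A B, is_open tX A /\ is_open tY B /\ (forall f, In f F -> A f) /\ (forall g, In g G -> B g) /\
    forall p, A (fst p) -> B (snd p) -> U p.
Proof.
  intros HU F G. induction F as [|f F IH]; intros HFG.
  - exists (fun _ => False), (fun _ => True). repeat split.
    apply open_empty. apply open_full. intros _ []. intros p [].
  - destruct IH as [A1 [B1 [HA1 [HB1 [HF1 [HG1 Hb1]]]]]]. intros; apply HFG; simpl; auto.
    destruct (L1 tX tY U HU f G) as [A2 [B2 [HA2 [HB2 [Af2 [HG2 Hb2]]]]]]. intros; apply HFG; simpl; auto.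
    exists (fun z => A1 z \/ A2 z), (fun y => B1 y /\ B2 y). repeat split; auto.
    apply open_union2; auto. apply open_inter; auto.
    intros f' [<-|Hf']; [right; auto | left; auto].
    intros p [a|a] [b1 b2]; auto.
Qed.

Definition cA {Z} (P S : (Z->Prop)->Prop) (F : (Z->Prop)->Prop) : Prop :=
  (forall A, F A -> P A) /\ ~ F whole /\ (forall K, S K -> exists A, F A /\ forall x, K x -> A x).
Definition cB {Z} (F : (Z->Prop)->Prop) : Prop :=
  infinite_family F /\ forall x, exists l, forall A, F A -> ~ A x -> In A l.
Definition range {Z} (B : nat -> (Z->Prop)) : (Z -> Prop) -> Prop := fun C => exists n, C = B n.

Lemma fin_inter {Z} (P : (Z->Prop)->Prop)
  (Pinter : forall A B, P A -> P B -> P (fun z => A z /\ B z)) (f : nat -> Z -> Prop) n :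
  (forall i, i <= n -> P (f i)) -> P (fun z => forall i, i <= n -> f i z).
Proof.
  induction n; intros H.
  - assert (E : f 0 = (fun z => forall i, i <= 0 -> f i z)).
    { apply set_ext; intro z; split. intros Hz i Hi. replace i with 0 by lia. auto.
      intros Hz; apply Hz; lia. }
    rewrite <- E. apply H; lia.
  - assert (E : (fun z => (fun z => forall i, i <= n -> f i z) z /\ f (S n) z) = (fun z => forall i, i <= S n -> f i z)).
    { apply set_ext; intro z; split. intros [H1 H2] i Hi.
      destruct (Nat.eq_dec i (S n)); subst; auto. apply H1; lia.
      intros Hz; split; [intros; apply Hz; lia | apply Hz; lia]. }
    rewrite <- E. apply Pinter. apply IHn; intros; apply H; lia. apply H; lia.
Qed.

Lemma seq_select {Z} (P S : (Z->Prop)->Prop)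
  (Pinter : forall A B, P A -> P B -> P (fun z => A z /\ B z))
  (HS1 : forall An : nat -> ((Z->Prop)->Prop), (forall n, cA P S (An n)) ->
     exists Bn, (forall n, An n (Bn n)) /\ cB (range Bn)) :
  forall An : nat -> ((Z->Prop)->Prop), (forall n, cA P S (An n)) ->
    exists Cn : nat -> Z -> Prop, (forall n, An n (Cn n)) /\ forall x, exists N, forall m, N <= m -> Cn m x.
Proof.
  intros An HA.
  set (W := fun n (Wset : Z -> Prop) => exists f : nat -> Z -> Prop,
              (forall i, i <= n -> An i (f i)) /\ Wset = (fun z => forall i, i <= n -> f i z)).
  assert (HW : forall n, cA P S (W n)).
  { intro n. split; [|split].
    - intros A [f [Hf ->]]. apply fin_inter; auto. intros i Hi. destruct (HA i) as [HP _]. apply HP, Hf; auto.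
    - intros [f [Hf E]]. destruct (HA 0) as [_ [Hw _]]. apply Hw.
      assert (E0 : f 0 = whole).
      { apply set_ext; intro z; split; [intros; exact I| intros _].
        assert (Hz : whole z) by exact I. rewrite E in Hz.
        apply Hz; lia. }
      rewrite <- E0; apply Hf; lia.
    - intros K HK.
      assert (Hc: forall i, exists A, An i A /\ forall x, K x -> A x)
        by (intro i; destruct (HA i) as [_ [_ H3]]; apply H3; auto).
      destruct (choice _ Hc) as [f Hf]. exists (fun z => forall i, i <= n -> f i z). split.
      exists f. split; auto. intros i _; apply Hf. intros x Kx i _. apply Hf; auto. }
  destruct (HS1 W HW) as [Bn [HBn [Hinf Hbad]]].
  destruct (choice _ HBn) as [g Hg].
  assert (Hnm : forall m, exists k, m <= k /\ ~ In (Bn k) (map Bn (seq 0 m))).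
  { intro m. destruct (Hinf (map Bn (seq 0 m))) as [A [[k ->] Hk]]. exists k; split; auto.
    destruct (le_lt_dec m k); auto. exfalso; apply Hk. apply in_map. apply in_seq. lia. }
  destruct (choice _ Hnm) as [nm Hnmp].
  exists (fun m => g (nm m) m). split.
  - intro m. destruct (Hg (nm m)) as [H1 _]. apply H1. apply Hnmp.
  - intro x. destruct (Hbad x) as [L HL].
    assert (Hfin : exists N, forall A, In A L -> (exists k, A = Bn k) -> exists j, j < N /\ A = Bn j).
    { clear HL. induction L as [|A L IH]. exists 0; intros A [].
      destruct IH as [N HN]. destruct (classic (exists k, A = Bn k)) as [[k Hk]|Hn].
      - exists (max N (k + 1)). intros A' [<-|HA'] HA''. exists k; split; [lia|auto].
        destruct (HN A' HA' HA'') as [j [? ?]]. exists j; split; [lia|auto].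
      - exists N. intros A' [<-|HA'] HA''. contradiction. apply HN; auto. }
    destruct Hfin as [N HN]. exists N. intros m Hm.
    destruct (Hg (nm m)) as [_ E].
    assert (HB : Bn (nm m) x).
    { apply NNPP; intro Hn.
      assert (Hin := HL (Bn (nm m)) (ex_intro _ (nm m) eq_refl) Hn).
      destruct (HN _ Hin (ex_intro _ (nm m) eq_refl)) as [j [Hj Ej]].
      destruct (Hnmp m) as [_ Hni]. apply Hni. rewrite Ej. apply in_map, in_seq. lia. }
    rewrite E in HB. apply HB. apply Hnmp.
Qed.

Lemma countable_sub {Y} (tY : topology Y) : S1 (cOmega tY) (cGamma tY) ->
  forall V, cOmega tY V -> exists s : nat -> Y -> Prop, (forall k, V (s k)) /\ cOmega tY (fun C => exists k, C = s k).
Proof.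
  intros HS V HV. destruct (HS (fun _ => V) (fun _ => HV)) as [s [Hs [Hinf [Hop Hbad]]]].
  exists s. split; auto. destruct HV as [HVo [HVw HVl]]. split; [|split].
  - intros A [k ->]. apply HVo, Hs.
  - intros [k Ek]. apply HVw. rewrite Ek. apply Hs.
  - intros G.
    assert (HL: exists L, forall A, (exists k, A = s k) -> (exists g, In g G /\ ~ A g) -> In A L).
    { induction G as [|g G IH]. exists nil. intros A _ [g [[] _]].
      destruct IH as [L HL]. destruct (Hbad g) as [Lg HLg]. exists (Lg ++ L).
      intros A HA [g' [[<-|Hg'] Hn]]. apply in_or_app; left; apply HLg; auto.
      apply in_or_app; right; apply HL; eauto. }
    destruct HL as [L HL]. destruct (Hinf L) as [A [HA HnA]]. exists A. split; auto.
    intros y Hy. apply NNPP; intro Hn. apply HnA, HL; eauto.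
Qed.

Lemma HS1_X {X} (tX : topology X) : S1 (cG_K tX) (cG_Gamma tX) ->
  forall An : nat -> ((X->Prop)->Prop), (forall n, cA (G_delta tX) (compact tX) (An n)) ->
    exists Bn, (forall n, An n (Bn n)) /\ cB (range Bn).
Proof.
  intros HS An HA. destruct (HS An HA) as [Bn [H1 [Hinf [_ Hcov]]]].
  exists Bn. split; auto. split; auto. intros x. apply NNPP; intro Hn.
  assert (Hsub : subfamily (fun A => range Bn A /\ ~ A x) (fun C => exists n, C = Bn n)).
  { intros A [? ?]; auto. }
  assert (Hi : infinite_family (fun A => range Bn A /\ ~ A x)).
  { intro l. apply NNPP; intro Hl. apply Hn. exists l. intros A HA0 HAx.
    apply NNPP; intro Hnin. apply Hl. exists A. auto. }
  destruct (Hcov _ Hsub Hi x) as [A [[HA1 HA2] HAx]]. contradiction.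
Qed.

Definition SY {Y} (K : Y -> Prop) : Prop := exists l, forall y, K y -> In y l.

Lemma HS1_Y {Y} (tY : topology Y) : S1 (cOmega tY) (cGamma tY) ->
  forall An : nat -> ((Y->Prop)->Prop), (forall n, cA (is_open tY) SY (An n)) ->
    exists Bn, (forall n, An n (Bn n)) /\ cB (range Bn).
Proof.
  intros HS An HA. destruct (HS An) as [Bn [H1 [Hinf [_ Hbad]]]].
  - intro n. destruct (HA n) as [a [b c]]. split; auto; split; auto. intro l.
    apply (c (fun y => In y l)). exists l; auto.
  - exists Bn; split; auto; split; auto.
Qed.

Lemma omega_cA {Y} (tY : topology Y) F : cOmega tY F -> cA (is_open tY) SY F.
Proof.
  intros [a [b c]]. split; auto; split; auto. intros K [l Hl].
  destruct (c l) as [A [HA HAl]]. exists A; split; auto.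
Qed.

Theorem theorem4p18 (X : Type) (tX : topology X) :
  space tX ->
  S1 (cG_K tX) (cG_Gamma tX) ->
  (forall K : X -> Prop, compact tX K -> finite_set K) ->
  forall (Y : Type) (tY : topology Y),
    gamma_space tY -> gamma_space (prod_topology tX tY).
Proof.
  intros [HinfX HT1X] HS1X Hcomp Y tY [[HinfY HT1Y] HS1Y].
  split.
  - split.
    + intro l. destruct (HinfX (map fst l)) as [x Hx]. destruct (HinfY nil) as [y _].
      exists (x,y). intro Hin. apply Hx. change x with (fst (x,y)). apply in_map; auto.
    + intros [x y] [x' y'] Hne. destruct (classic (x = x')) as [<-|Hx].
      * assert (Hy : y <> y') by congruence. destruct (HT1Y y y' Hy) as [V [HV [Vy Vy']]].
        exists (fun p => V (snd p)). split; [|simpl; auto].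
        intros p Hp. exists (fun _ => True), V. repeat split; auto. apply open_full.
      * destruct (HT1X x x' Hx) as [V [HV [Vx Vx']]].
        exists (fun p => V (fst p)). split; [|simpl; auto].
        intros p Hp. exists V, (fun _ => True). repeat split; auto. apply open_full.
  - intros Un HUn.
    set (Vf := fun n (F : list X) (V : Y -> Prop) => is_open tY V /\ V <> whole /\
           exists U, Un n U /\ exists A, is_open tX A /\ (forall f, In f F -> A f) /\
             forall p, A (fst p) -> V (snd p) -> U p).
    assert (HV : forall n F, cOmega tY (Vf n F)).
    { intros n F. split; [|split].
      - intros V [H _]; auto.
      - intros [_ [H _]]; auto.
      - intros G. destruct (HinfY G) as [y0 Hy0]. destruct (HUn n) as [Hop [_ Hl]].
        destruct (Hl (list_prod F G)) as [U [HU HUl]].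
        destruct (L2 tX tY U (Hop U HU) F G) as [A [B [HA [HB [HAF [HBG Hbox]]]]]].
        { intros f g Hf Hg. apply HUl. apply in_prod; auto. }
        exists (fun y => B y /\ y <> y0). split.
        + split; [apply open_inter; auto; apply open_compl_pt; auto |]. split.
          * intro E. assert (H: whole y0) by exact I. rewrite <- E in H.
            destruct H; auto.
          * exists U; split; auto. exists A; split; auto. split; auto.
            intros p Ha [Hb _]. apply Hbox; auto.
        + intros y Hy. split; auto. intro; subst; auto. }
    assert (Hs : forall nF : nat * list X, exists s : nat -> Y -> Prop,
               (forall k, Vf (fst nF) (snd nF) (s k)) /\ cOmega tY (fun C => exists k, C = s k)).
    { intros [n F]. apply countable_sub; auto. }
    destruct (choice _ Hs) as [s Hsp].
    assert (Hua : forall t : nat * list X * nat, exists ua : (X*Y -> Prop) * (X -> Prop),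
               Un (fst (fst t)) (fst ua) /\ is_open tX (snd ua) /\
               (forall f, In f (snd (fst t)) -> snd ua f) /\
               forall p, snd ua (fst p) -> s (fst t) (snd t) (snd p) -> fst ua p).
    { intros [[n F] k]. destruct (Hsp (n,F)) as [Hk _].
      destruct (Hk k) as [_ [_ [U [HU [A [HA [HAF Hbox]]]]]]]. exists (U, A). simpl. auto. }
    destruct (choice _ Hua) as [ua Hua'].
    assert (Hz : forall F : list X, exists z, ~ In z F) by (intro F; apply HinfX).
    destruct (choice _ Hz) as [zf Hzf].
    set (H := fun n F => fun x => x <> zf F /\ forall k, snd (ua (n,F,k)) x).
    set (Af := fun n (C : X -> Prop) => exists F, C = H n F).
    assert (HAf : forall n, cA (G_delta tX) (compact tX) (Af n)).
    { intros n. split; [|split].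
      - intros C [F ->].
        exists (fun j => match j with 0 => (fun x => x <> zf F) | S k => snd (ua (n,F,k)) end).
        split.
        + intros [|k]. apply open_compl_pt; auto. apply (Hua' (n,F,k)).
        + intros x. split. intros [H1 H2] [|k]; simpl; auto.
          intros Hx. split. apply (Hx 0). intro k; apply (Hx (S k)).
      - intros [F E]. assert (Hw : H n F (zf F)) by (rewrite <- E; exact I).
        destruct Hw as [Hw _]; auto.
      - intros K HK. destruct (Hcomp K HK) as [F HF]. exists (H n F). split. exists F; auto.
        intros x Kx. split.
        + intro E. apply (Hzf F). rewrite <- E; auto.
        + intro k. destruct (Hua' (n,F,k)) as [_ [_ [Hf _]]]. apply Hf. auto. }
    destruct (seq_select _ _ (gdelta_inter tX) (HS1_X tX HS1X) Af HAf) as [C [HC HCev]].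
    destruct (choice _ HC) as [Fn HFn].
    destruct (seq_select (is_open tY) SY (open_inter tY) (HS1_Y tY HS1Y)
               (fun n => fun D => exists k, D = s (n, Fn n) k)) as [D [HD HDev]].
    { intro n. apply omega_cA. apply (Hsp (n, Fn n)). }
    destruct (choice _ HD) as [kn Hkn].
    exists (fun n => fst (ua (n, Fn n, kn n))).
    assert (Hev : forall p, exists N, forall m, N <= m -> fst (ua (m, Fn m, kn m)) p).
    { intros [x y]. destruct (HCev x) as [N1 H1]. destruct (HDev y) as [N2 H2].
      exists (max N1 N2). intros m Hm.
      assert (Cx := H1 m ltac:(lia)). rewrite HFn in Cx. destruct Cx as [_ Cx].
      assert (Dy := H2 m ltac:(lia)). rewrite Hkn in Dy.
      destruct (Hua' (m, Fn m, kn m)) as [_ [_ [_ Hbox]]]. apply Hbox; simpl; auto. }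
    split.
    + intro n. apply (Hua' (n, Fn n, kn n)).
    + split; [|split].
      * intro l.
        assert (Hl : exists N, forall m, N <= m -> forall A, In A l -> A <> whole ->
                   A <> fst (ua (m, Fn m, kn m))).
        { induction l as [|A l IH]. exists 0. intros m _ A [].
          destruct IH as [N HN]. destruct (classic (A = whole)) as [Hw|Hw].
          - exists N. intros m Hm A' [<-|HA'] Hnw; [contradiction | apply HN; auto].
          - assert (Hp : exists p, ~ A p).
            { apply NNPP; intro Hn. apply Hw. apply set_ext; intro p; split; [intros; exact I|].
              intros _. apply NNPP; intro Hnp. apply Hn; eauto. }
            destruct Hp as [p Hp]. destruct (Hev p) as [Np HNp].
            exists (max N Np). intros m Hm A' [<-|HA'] Hnw.
            + intro E. apply Hp. rewrite E. apply HNp; lia.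
            + apply HN; auto; lia. }
        destruct Hl as [N HN]. exists (fst (ua (N, Fn N, kn N))). split. exists N; auto.
        intro Hin. apply (HN N (le_n N) _ Hin); auto.
        intro Ew. destruct (HUn N) as [_ [Hnw _]]. apply Hnw. rewrite <- Ew.
        apply (Hua' (N, Fn N, kn N)).
      * intros A [n ->]. destruct (HUn n) as [Ho _]. apply Ho. apply (Hua' (n, Fn n, kn n)).
      * intros p. destruct (Hev p) as [N HN]. exists (map (fun n => fst (ua (n, Fn n, kn n))) (seq 0 N)).
        intros A [m ->] Hn. destruct (le_lt_dec N m).
        -- exfalso; apply Hn, HN; auto.
        -- apply (in_map (fun n => fst (ua (n, Fn n, kn n)))), in_seq; lia.
Qed.
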